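(* If $L$ is a regular language, then ${\rm pssr}(L)$ is context-free.
   Context: For words $x=a_1\cdots a_n$, $y=b_1\cdots b_n$ of the same length, the perfect shuffle is $x\,\text{sh}\,y=a_1b_1a_2b_2\cdots a_nb_n$. $x^R$ denotes the reversal of $x$. For a language $L$, ${\rm pssr}(L)=\{x\,\text{sh}\,x^R : x\in L\}$. *)

(* Defs.v *)
From Stdlib Require Import Relations.Relation_Operators.
From mathcomp Require Import all_boot.
Set Implicit Arguments. Unset Strict Implicit. Unset Printing Implicit Defensive.

Definition language (Sigma : finType) := seq Sigma -> Prop.

(* Perfect shuffle  a1 b1 a2 b2 ... an bn  (intended for |x| = |y|). *)
Fixpoint pshuffle (T : Type) (x y : seq T) : seq T :=
  match x, y with
  | a :: x', b :: y' => a :: b :: pshuffle x' y'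
  | _, _ => [::]
  end.

Definition pssr (Sigma : finType) (L : language Sigma) : language Sigma :=
  fun w => exists x, L x /\ w = pshuffle x (rev x).

Record dfa (Sigma : finType) := DFA {
  dfa_state : finType;
  dfa_start : dfa_state;
  dfa_trans : dfa_state -> Sigma -> dfa_state;
  dfa_final : pred dfa_state }.

Definition dfa_accepts (Sigma : finType) (A : dfa Sigma) (w : seq Sigma) : bool :=
  @dfa_final Sigma A (foldl (@dfa_trans Sigma A) (@dfa_start Sigma A) w).

Definition regular (Sigma : finType) (L : language Sigma) : Prop :=
  exists A : dfa Sigma, forall w, L w <-> dfa_accepts A w.

Record cfg (Sigma : finType) := CFG {
  cfg_nt : finType;
  cfg_start : cfg_nt;
  cfg_rules : seq (cfg_nt * seq (cfg_nt + Sigma)) }.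

Inductive cfg_step (Sigma : finType) (G : cfg Sigma) :
    seq (cfg_nt G + Sigma) -> seq (cfg_nt G + Sigma) -> Prop :=
  | CfgStep (u v alpha : seq (cfg_nt G + Sigma)) (A : cfg_nt G) :
      (A, alpha) \in @cfg_rules Sigma G ->
      @cfg_step Sigma G (u ++ inl A :: v) (u ++ alpha ++ v).

Definition cfg_generates (Sigma : finType) (G : cfg Sigma) (w : seq Sigma) : Prop :=
  clos_refl_trans _ (@cfg_step Sigma G) [:: inl (@cfg_start Sigma G)] (map inr w).

Definition context_free (Sigma : finType) (L : language Sigma) : Prop :=
  exists G : cfg Sigma, forall w, L w <-> cfg_generates G w.

(* Main.v *)
Require Import Defs.
From Stdlib Require Import Relations.Relation_Operators.
From mathcomp Require Import all_boot.
Set Implicit Arguments. Unset Strict Implicit. Unset Printing Implicit Defensive.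

Lemma no_inl (X Y : Type) (v : seq Y) (u0 v0 : seq (X + Y)) (a : X) :
  map inr v <> u0 ++ inl a :: v0.
Proof.
elim: v u0 => [|b v IH] [|c u0] //= H; inversion H. by apply: (IH u0).
Qed.

Lemma map_inr_split (X Y : Type) (u v : seq Y) (u0 v0 : seq (X + Y)) (x a : X) :
  map inr u ++ inl x :: map inr v = u0 ++ inl a :: v0 ->
  u0 = map inr u /\ x = a /\ v0 = map inr v.
Proof.
elim: u u0 => [|b u IH] [|c u0] /= H; inversion H; subst => //.
- by exfalso; apply: (no_inl H2).
- have [-> [-> ->]] := IH _ H2; by [].
Qed.

Lemma pshuffle_rcons (T : Type) (x y : seq T) a b : size x = size y ->
  pshuffle (rcons x a) (rcons y b) = pshuffle x y ++ [:: a; b].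
Proof.
elim: x y => [|c x IH] [|d y] //= [] H. by rewrite IH.
Qed.

Lemma size_pshuffle_rev (T : Type) (y : seq T) a b :
  pshuffle (a :: rcons y b) (rev (a :: rcons y b)) =
  [:: a; b] ++ pshuffle y (rev y) ++ [:: b; a].
Proof.
rewrite rev_cons rev_rcons /= pshuffle_rcons ?size_rev //.
Qed.

Section Constr.
Variable Sigma : finType.
Variable A : dfa Sigma.
Variable L : language Sigma.
Hypothesis HL : forall w, L w <-> dfa_accepts A w.

Notation S := (@dfa_state Sigma A).
Notation d := (@dfa_trans Sigma A).
Notation s0 := (@dfa_start Sigma A).
Definition run (p : S) (y : seq Sigma) := foldl d p y.

Definition NT : finType := option (S * S)%type.

Definition rules : seq (NT * seq (NT + Sigma)) :=
  [seq (None, [:: inl (Some (s0, q))]) | q <- enum S & @dfa_final Sigma A q] ++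
  [seq (Some (p, p), [::]) | p <- enum S] ++
  [seq (Some (t.1, d t.1 t.2), [:: inr t.2; inr t.2]) | t <- enum {: S * Sigma}] ++
  [seq (Some (t.1.1.1, d t.2 t.1.2),
        [:: inr t.1.1.2; inr t.1.2; inl (Some (d t.1.1.1 t.1.1.2, t.2));
            inr t.1.2; inr t.1.1.2]) | t <- enum {: S * Sigma * Sigma * S}].

Definition G : cfg Sigma := @CFG Sigma NT None rules.

Lemma rulesP X alpha : (X, alpha) \in rules ->
  (X = None /\ exists q, @dfa_final Sigma A q /\ alpha = [:: inl (Some (s0, q))]) \/
  (exists p, X = Some (p, p) /\ alpha = [::]) \/
  (exists p a, X = Some (p, d p a) /\ alpha = [:: inr a; inr a]) \/
  (exists p a b r, X = Some (p, d r b) /\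
     alpha = [:: inr a; inr b; inl (Some (d p a, r)); inr b; inr a]).
Proof.
rewrite !mem_cat => /or4P [] /mapP [t Ht [-> ->]].
- left; split => //; exists t; split => //. by move: Ht; rewrite mem_filter => /andP [].
- by right; left; exists t.
- by right; right; left; exists t.1, t.2.
- by right; right; right; exists t.1.1.1, t.1.1.2, t.1.2, t.2.
Qed.

Lemma rule_mem X alpha :
  ((X = None /\ exists q, @dfa_final Sigma A q /\ alpha = [:: inl (Some (s0, q))]) \/
  (exists p, X = Some (p, p) /\ alpha = [::]) \/
  (exists p a, X = Some (p, d p a) /\ alpha = [:: inr a; inr a]) \/
  (exists p a b r, X = Some (p, d r b) /\
     alpha = [:: inr a; inr b; inl (Some (d p a, r)); inr b; inr a])) ->
  (X, alpha) \in rules.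
Proof.
rewrite !mem_cat.
case=> [[-> [q [Hq ->]]]|[[p [-> ->]]|[[p [a [-> ->]]]|[p [a [b [r [-> ->]]]]]]]].
- apply/or4P; constructor 1; apply/mapP; exists q => //; by rewrite mem_filter Hq mem_enum.
- apply/or4P; constructor 2; apply/mapP; exists p => //; by rewrite mem_enum.
- apply/or4P; constructor 3; apply/mapP; exists (p, a) => //; by rewrite mem_enum.
- apply/or4P; constructor 4; apply/mapP; exists (p, a, b, r) => //; by rewrite mem_enum.
Qed.


Definition Inv (f : seq (NT + Sigma)) : Prop :=
  f = [:: inl None] \/
  (exists u v p q, f = map inr u ++ inl (Some (p, q)) :: map inr v /\
     forall y, run p y = q -> pssr L (u ++ pshuffle y (rev y) ++ v)) \/
  (exists w, f = map inr w /\ pssr L w).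

Lemma Inv_step f g : Inv f -> @cfg_step Sigma G f g -> Inv g.
Proof.
move=> HI Hst; case: Hst HI => u0 v0 alpha X Hr HI; have := rulesP Hr.
case: HI => [H1|[[u [v [p [q [Hf Hy]]]]]|[w [Hf _]]]].
- case: u0 H1 => [|c u0] H1; last by case: u0 H1 => [|? ?] H1; inversion H1.
  case: H1 => -> Hv0; subst v0.
  case=> [[_ [q [Hq ->]]]|[[p [Hp _]]|[[p [a [Hp _]]]|[p [a [b [r [Hp _]]]]]]]] //.
  right; left; exists [::], [::], s0, q; split => //.
  move=> y Hy; exists y; split => //; last by rewrite cats0.
  by apply/HL; rewrite /dfa_accepts; move: Hy; rewrite /run => ->.
- have [-> [<- ->]] := map_inr_split (esym Hf).
  case=> [[//]|[[p' [[E1 E2] ->]]|[[p' [a [[E1 E2] ->]]]|[p' [a [b [r [[E1 E2] ->]]]]]]]]; subst.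
  + right; right; exists (u ++ v); split; first by rewrite map_cat.
    by have := Hy [::] erefl.
  + right; right; exists (u ++ [:: a; a] ++ v); split; first by rewrite !map_cat.
    by have := Hy [:: a] erefl.
  + right; left; exists (u ++ [:: a; b]), ([:: b; a] ++ v), (d p' a), r; split.
      by rewrite !map_cat -!catA.
    move=> y Hy'; have := Hy (a :: rcons y b).
    rewrite size_pshuffle_rev /run /= foldl_rcons -/(run _ _) Hy' => /(_ erefl).
    by rewrite -!catA.
- by exfalso; apply: (no_inl (esym Hf)).
Qed.

Lemma Inv_rt f g : clos_refl_trans _ (@cfg_step Sigma G) f g -> Inv f -> Inv g.
Proof.
elim=> [x y Hs|x|x y z _ IH1 _ IH2] HI //; [exact: Inv_step Hs | exact: IH2 (IH1 HI)].
Qed.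

Lemma complete n y p : size y <= n -> forall u v,
  clos_refl_trans _ (@cfg_step Sigma G)
    (u ++ inl (Some (p, run p y)) :: v) (u ++ map inr (pshuffle y (rev y)) ++ v).
Proof.
elim: n y p => [|n IH] y p Hs u v.
  case: y Hs => // _; apply: rt_step; apply: CfgStep; apply: rule_mem.
  by right; left; exists p.
case: y Hs => [|a y1] Hs.
  apply: rt_step; apply: CfgStep; apply: rule_mem; by right; left; exists p.
case/lastP: y1 Hs => [|y b] Hs.
  apply: rt_step; apply: CfgStep; apply: rule_mem; by right; right; left; exists p, a.
apply: rt_trans.
  apply: rt_step; apply: (@CfgStep _ G u v
    [:: inr a; inr b; inl (Some (d p a, run (d p a) y)); inr b; inr a]).
  apply: rule_mem; right; right; right; exists p, a, b, (run (d p a) y); split => //.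
  by rewrite /run /= foldl_rcons.
rewrite size_pshuffle_rev.
have := IH y (d p a) _ (u ++ [:: inr a; inr b]) ([:: inr b; inr a] ++ v).
rewrite !map_cat -!catA /=; apply.
by move: Hs; rewrite /= size_rcons ltnS => /ltnW.
Qed.

End Constr.

Theorem mainTheorem8 (Sigma : finType) (L : language Sigma) :
  regular L -> context_free (pssr L).
Proof.
move=> [A HL]; exists (G A) => w; split.
- move=> [x [Lx ->]]; rewrite /cfg_generates.
  have Hm : (None, [:: inl (Some (@dfa_start Sigma A, run (@dfa_start Sigma A) x))])
     \in cfg_rules (G A).
    apply: rule_mem; left; split => //; eexists; split; last by [].
    by have := (HL x).1 Lx.
  apply: rt_trans; first exact: (rt_step _ _ _ _ (CfgStep [::] [::] Hm)).
  have := complete (@dfa_start Sigma A) (leqnn (size x)) [::] [::]; by rewrite /= !cats0.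
- move=> Hg; have := Inv_rt HL Hg (or_introl erefl).
  case=> [|[[u [v [p [q [Hf _]]]]]|[w' [Hf Hw]]]].
  + by case: w Hg.
  + by exfalso; apply: (no_inl Hf).
  + have -> : w = w' by apply: (inj_map (f:=inr) _ Hf) => ? ? [].
    exact: Hw.
Qed.
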